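(* Let $G$ be a finite simple graph with ${\rm diam}(G)=k$, and let $e$ be an edge of $G$ such that ${\rm diam}(G-e) > k$. Let $u, v$ be two vertices of $G$ with $d_{G-e}(u,v)>k$. If there exists a $\chi_\rho(G)$-packing coloring $c$ of $G$ such that $c(v)>c(u) \geq k$, then $\chi_\rho(G-e) < \chi_\rho(G)$.
   Context: A $k$-packing coloring of a graph $G$ is a map $c:V(G)\to\{1,\ldots,k\}$ such that two distinct vertices $u,v$ with $c(u)=c(v)=i$ satisfy $d_G(u,v)>i$ (distance between vertices in different components is infinite). The packing chromatic number $\chi_\rho(G)$ is the smallest $k$ for which $G$ admits a $k$-packing coloring. ${\rm diam}$ denotes the diameter (maximum distance between two vertices, infinite if disconnected); $G-e$ is $G$ with the edge $e$ deleted. *)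

(* Defs.v *)
From mathcomp Require Import all_boot.
Set Implicit Arguments. Unset Strict Implicit. Unset Printing Implicit Defensive.

(* A finite simple graph: vertex set a finType T, adjacency G : rel T,
   symmetric and irreflexive (hypotheses stated in the theorem). *)

(* reach G n x y  <=>  d_G(x,y) <= n  (there is a walk of length <= n). *)
Fixpoint reach (T : finType) (G : rel T) (n : nat) (x y : T) : bool :=
  match n with
  | 0 => x == y
  | n'.+1 => reach G n' x y || [exists z, reach G n' x z && G z y]
  end.

Definition del_edge (T : finType) (G : rel T) (a b : T) : rel T :=
  fun x y => G x y && ~~ (((x == a) && (y == b)) || ((x == b) && (y == a))).

Definition diam_eq (T : finType) (G : rel T) (k : nat) : Prop :=
  (forall x y, reach G k x y) /\
  (forall k', (forall x y, reach G k' x y) -> k <= k').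

Definition packing_coloring (T : finType) (G : rel T) (k : nat) (c : T -> nat) : Prop :=
  (forall x, 1 <= c x <= k) /\
  (forall x y, x != y -> c x = c y -> ~~ reach G (c x) x y).

Definition has_packing (T : finType) (G : rel T) : pred nat :=
  fun k => [exists c : {ffun T -> 'I_k.+1},
              [forall x, 0 < c x] &&
              [forall x, forall y,
                 ((x != y) && (c x == c y :> nat)) ==> ~~ reach G (c x) x y]].

Lemma has_packing_exists (T : finType) (G : rel T) : exists k, has_packing G k.
Proof.
exists #|T|; apply/existsP.
exists [ffun x => inord (enum_rank x).+1 : 'I_#|T|.+1].
apply/andP; split.
  by apply/forallP=> x; rewrite ffunE inordK // ltnS ltn_ord.
apply/forallP=> x; apply/forallP=> y; apply/implyP=> /andP [nxy].
rewrite !ffunE !inordK ?ltnS ?ltn_ord // eqSS => /eqP /ord_inj /enum_rank_inj exy.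
by rewrite exy eqxx in nxy.
Qed.

Definition chi_rho (T : finType) (G : rel T) : nat :=
  ex_minn (has_packing_exists G).

(* Main.v *)
Require Import Defs.
From mathcomp Require Import all_boot.
From mathcomp Require Import zify.

Lemma reach_rel (T : finType) (G H : rel T) n x y :
  (forall a b, H a b -> G a b) -> reach H n x y -> reach G n x y.
Proof.
move=> HG; elim: n y => [|n IH] y //=.
case/orP=> [/IH -> //|/existsP [z /andP [/IH r /HG h]]].
by apply/orP; right; apply/existsP; exists z; rewrite r h.
Qed.

Arguments reach_rel {T G H n x y}.
Lemma reach_le (T : finType) (G : rel T) n n' x y :
  n <= n' -> reach G n x y -> reach G n' x y.
Proof.
elim: n' => [|n' IH]; first by rewrite leqn0 => /eqP ->.
rewrite leq_eqVlt => /orP [/eqP -> //| h] r.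
by rewrite /= IH.
Qed.

Arguments reach_le {T G n n' x y}.
Lemma reach_cons (T : finType) (G : rel T) n x z y :
  G x z -> reach G n z y -> reach G n.+1 x y.
Proof.
move=> gxz; elim: n y => [|n IH] y /=.
  move/eqP=> <-; apply/orP; right; apply/existsP; exists x; by rewrite eqxx gxz.
case/orP=> [/IH r|/existsP [w /andP [/IH r g]]].
  by change (reach G n.+2 x y); exact: (reach_le (leqnSn _) r).
change (reach G n.+1 x y || [exists z, reach G n.+1 x z && G z y]).
apply/orP; right; apply/existsP; exists w; by rewrite r g.
Qed.

Arguments reach_cons {T G n x z y}.
Lemma reach_sym (T : finType) (G : rel T) n x y :
  symmetric G -> reach G n x y -> reach G n y x.
Proof.
move=> Gs; elim: n x y => [|n IH] x y /=; first by rewrite eq_sym.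
case/orP=> [/IH -> //|/existsP [z /andP [/IH r g]]].
apply: (@reach_cons _ _ _ _ z _) r; by rewrite Gs.
Qed.

Arguments reach_sym {T G n x y}.
Theorem lemma2p3 (T : finType) (G : rel T)
  (G_sym : symmetric G) (G_irr : irreflexive G)
  (k : nat) (a b : T) (Gab : G a b)
  (diamG : diam_eq G k)
  (diamGe : exists x y, ~~ reach (del_edge G a b) k x y)
  (u v : T) (duv : ~~ reach (del_edge G a b) k u v)
  (c : T -> nat) (Hc : packing_coloring G (chi_rho G) c)
  (Hcuv : k <= c u < c v) :
  chi_rho (del_edge G a b) < chi_rho G.
Proof.
set Ge := del_edge G a b.
set m := chi_rho G.
have Gesub : forall x y, Ge x y -> G x y by move=> x y /andP [].
have Ges : symmetric Ge.
  move=> x y; rewrite /Ge /del_edge G_sym; congr (_ && _).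
  by case: (x == a); case: (y == b); case: (x == b); case: (y == a).
have uv : u != v.
  apply/negP=> /eqP e; move: duv; rewrite e.
  by move/negP; apply; apply: (@reach_le _ _ 0) => //=.
have k1 : 0 < k.
  case: k diamG diamGe Hcuv duv => // [[H1 _]] _ _ _.
  by move: (H1 u v) => /= /eqP e; rewrite e eqxx in uv.
have cinj : forall x y, k <= c x -> c x = c y -> x = y.
  move=> x y kx e; apply/eqP; apply/negPn/negP=> nxy.
  move: (Hc.2 x y nxy e); rewrite (reach_le kx) //; exact: diamG.1.
have cvm : c v <= m by case/andP: (Hc.1 v).
pose c' x := if c x < k then c x else if (x == u) || (x == v) then k
   else if c x < c u then (c x).+1 else if c x < c v then c x else (c x).-1.
have cxm : forall x, c x <= m by move=> x; case/andP: (Hc.1 x).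
have cx1 : forall x, 0 < c x by move=> x; case/andP: (Hc.1 x).
have bnd : forall x, 0 < c' x <= m.-1.
  move=> x; rewrite /c'; move: (cxm x) (cx1 x) => h1 h2.
  case: ifP => h3; first lia.
  case: ifP => h4; first lia.
  have nu : c x != c u.
    apply/negP=> /eqP e; have := cinj _ _ _ e; rewrite leqNgt h3 => /(_ isT) ex.
    by rewrite ex eqxx in h4.
  have nv : c x != c v.
    apply/negP=> /eqP e; have := cinj _ _ _ e; rewrite leqNgt h3 => /(_ isT) ex.
    by rewrite ex eqxx orbT in h4.
  case: ifP => h5; first lia.
  case: ifP => h6; lia.
have key : forall x y, x != y -> c' x = c' y -> ~~ reach Ge (c' x) x y.
  move=> x y nxy.
  have nu : forall z, k <= c z -> z != u -> c z != c u.
    move=> z kz nz; apply/negP=> /eqP e; have := cinj _ _ kz e => ez.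
    by rewrite ez eqxx in nz.
  have nv : forall z, k <= c z -> z != v -> c z != c v.
    move=> z kz nz; apply/negP=> /eqP e; have := cinj _ _ kz e => ez.
    by rewrite ez eqxx in nz.
  rewrite /c'.
  case: (ltnP (c x) k) => hx; case: (ltnP (c y) k) => hy.
  - move=> e; apply/negP=> /(reach_rel Gesub) r.
    by move: (Hc.2 x y nxy e); rewrite r.
  - case: ifP => ?; first lia.
    case: ifP => ?; first lia.
    case: ifP => ?; lia.
  - case: ifP => ?; first lia.
    case: ifP => ?; first lia.
    case: ifP => ?; lia.
  - case: (boolP ((x == u) || (x == v))) => hxuv;
      case: (boolP ((y == u) || (y == v))) => hyuv.
    + move=> _.
      case/orP: hxuv => /eqP ex; case/orP: hyuv => /eqP ey; subst.
      * by rewrite eqxx in nxy.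
      * exact: duv.
      * by apply/negP=> /(reach_sym Ges); apply/negP.
      * by rewrite eqxx in nxy.
    + move: hyuv; rewrite negb_or => /andP [yu yv].
      move: (nu _ hy yu) (nv _ hy yv) => a1 a2.
      case: ifP => ?; first lia.
      case: ifP => ?; lia.
    + move: hxuv; rewrite negb_or => /andP [xu xv].
      move: (nu _ hx xu) (nv _ hx xv) => a1 a2.
      case: ifP => ?; first lia.
      case: ifP => ?; lia.
    + move: hyuv; rewrite negb_or => /andP [yu yv].
      move: (nu _ hy yu) (nv _ hy yv) => a1 a2.
      move: hxuv; rewrite negb_or => /andP [xu xv].
      move: (nu _ hx xu) (nv _ hx xv) => a3 a4.
      move=> e; exfalso.
      have ecxy : c x = c y.
        move: e; case: ifP => ?; case: ifP => ?; try case: ifP => ?;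
          try case: ifP => ?; lia.
      by move: (cinj _ _ hx ecxy) => exy; rewrite exy eqxx in nxy.
have hp : has_packing Ge m.-1.
  apply/existsP; exists [ffun x => inord (c' x) : 'I_(m.-1).+1].
  apply/andP; split.
    apply/forallP=> x; rewrite ffunE inordK; first by case/andP: (bnd x).
    by case/andP: (bnd x) => _ h; rewrite ltnS.
  apply/forallP=> x; apply/forallP=> y; apply/implyP=> /andP [nxy].
  rewrite !ffunE !inordK; last by case/andP: (bnd x) => _ h; rewrite ltnS.
    by move/eqP=> e; apply: key.
  by case/andP: (bnd y) => _ h; rewrite ltnS.
have m0 : 0 < m by lia.
rewrite /chi_rho; case: ex_minnP => n _ /(_ _ hp) h.
rewrite -/m; lia.
Qed.
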